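(* Let $a,b,d\in\mathbb C$ with $a\notin\mathbb Z$ and $d\notin\{0,-1,-2,\dots\}$. Then, as an identity of formal power series in $x,y$, $$F(a,b;d;x)\,{}_0F_1(1-a;y)=\mathrm H_3(a,b;d;x,-y)+\sum_{k=1}^\infty\sum_{l=1}^k\frac{(-1)^{k-l}(k-1)!}{(l-1)!\,l!\,(k-l)!}\,\frac{(b)_l}{(1-a)_k(1-a)_{k-l}(d)_l}\,x^ly^k\,\mathrm H_3(a-k+l,b+l;d+l;x,-y).$$
   Context: Pochhammer symbol: $(\lambda)_k=\Gamma(\lambda+k)/\Gamma(\lambda)$ for every integer $k$ (possibly negative) whenever defined; $(\lambda)_0=1$. $F(a,b;c;x)=\sum_{k\ge0}\frac{(a)_k(b)_k}{(c)_k k!}x^k$, ${}_0F_1(c;x)=\sum_{k\ge0}\frac{x^k}{(c)_k k!}$. Confluent Horn function $\mathrm H_3(a,b;d;x,y)=\sum_{p,q\ge0}\frac{(a)_{p-q}(b)_p}{(d)_p\,p!\,q!}x^py^q$. All functions are regarded as formal power series in $x,y$; the infinite double sum converges in the formal (degree) topology. *)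

(* Defs.v *)
From HB Require Import structures.
From mathcomp Require Import all_boot all_order all_algebra.
Set Implicit Arguments. Unset Strict Implicit. Unset Printing Implicit Defensive.
Import Order.TTheory GRing.Theory Num.Theory.
Local Open Scope ring_scope.

(* Pochhammer symbol with integer index:
   (x)_n = x (x+1) ... (x+n-1) for n >= 0,
   (x)_{-(n+1)} = Gamma(x-n-1)/Gamma(x) = 1 / ((x-1)(x-2)...(x-n-1)). *)
Definition poch (R : fieldType) (x : R) (k : int) : R :=
  match k with
  | Posz n => \prod_(i < n) (x + i%:R)
  | Negz n => (\prod_(i < n.+1) (x - (i.+1)%:R))^-1
  end.

(* Formal power series in two variables x, y, given by their coefficients:
   f m n is the coefficient of x^m y^n. *)
Definition fps (R : fieldType) := nat -> nat -> R.

Definition fps_add (R : fieldType) (f g : fps R) : fps R :=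
  fun m n => f m n + g m n.

Definition fps_scale (R : fieldType) (c : R) (f : fps R) : fps R :=
  fun m n => c * f m n.

Definition fps_mul (R : fieldType) (f g : fps R) : fps R :=
  fun m n => \sum_(i < m.+1) \sum_(j < n.+1) f i j * g (m - i)%N (n - j)%N.

Definition fps_negy (R : fieldType) (f : fps R) : fps R :=
  fun m n => (-1) ^+ n * f m n.

Definition fps_shift (R : fieldType) (l k : nat) (f : fps R) : fps R :=
  fun m n => if (l <= m)%N && (k <= n)%N then f (m - l)%N (n - k)%N else 0.

(* The formal (degree-topology) sum  \sum_{k>=1} \sum_{l=1}^{k} x^l y^k G k l.
   The term (k,l) only contributes to coefficients of x^m y^n with k <= n,
   so the coefficient of x^m y^n is the finite sum over 1 <= k <= n. *)
Definition fps_sum_xy (R : fieldType) (G : nat -> nat -> fps R) : fps R :=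
  fun m n => \sum_(1 <= k < n.+1) \sum_(1 <= l < k.+1) fps_shift l k (G k l) m n.

Definition hyp2F1 (R : fieldType) (a b c : R) : fps R :=
  fun m n => if n == 0%N then
      poch a m * poch b m / (poch c m * (m`!)%:R) else 0.

Definition hyp0F1 (R : fieldType) (c : R) : fps R :=
  fun m n => if m == 0%N then 1 / (poch c n * (n`!)%:R) else 0.

Definition hornH3 (R : fieldType) (a b d : R) : fps R :=
  fun p q => poch a (p%:Z - q%:Z) * poch b p / (poch d p * (p`!)%:R * (q`!)%:R).

Definition coefKL (R : fieldType) (a b d : R) (k l : nat) : R :=
  (-1) ^+ (k - l) * ((k.-1)`!)%:R / (((l.-1)`!)%:R * (l`!)%:R * ((k - l)`!)%:R)
  * (poch b l / (poch (1 - a) k * poch (1 - a) (k - l)%N * poch d l)).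

(* Main.v *)
Require Import Defs.
From HB Require Import structures.
From mathcomp Require Import all_boot all_order all_algebra.
From mathcomp Require Import ring zify.
Import Order.TTheory GRing.Theory Num.Theory.
Local Open Scope ring_scope.
Section H.
Variable R : fieldType.
Implicit Types (x y : R).

Definition rf x (n : nat) : R := \prod_(i < n) (x + i%:R).

Lemma poch_nat x (n : nat) : poch x n = rf x n.
Proof. by []. Qed.

Lemma rfS x n : rf x n.+1 = rf x n * (x + n%:R).
Proof. by rewrite /rf big_ord_recr. Qed.

Lemma rfSl x n : rf x n.+1 = x * rf (x + 1) n.
Proof.
rewrite /rf big_ord_recl addr0; congr (_ * _); apply: eq_bigr => i _.
rewrite /bump /= -nat1r; ring.
Qed.

Lemma rf_add x m n : rf x (m + n) = rf x m * rf (x + m%:R) n.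
Proof.
elim: n => [|n IH]; first by rewrite addn0 /rf big_ord0 mulr1.
by rewrite addnS !rfS IH natrD addrA mulrA.
Qed.

Lemma poch_succ x (z : int) : x + z%:~R != 0 ->
  poch x (z + 1) = poch x z * (x + z%:~R).
Proof.
case: z => n Hn.
  have -> : (Posz n + 1 = Posz n.+1)%R by rewrite -addn1 PoszD.
  by rewrite !poch_nat rfS.
have E : (x + (Negz n)%:~R) = x - (n.+1)%:R by rewrite NegzE mulrNz.
rewrite E in Hn *; rewrite /= big_ord_recr /= invfM -mulrA mulVf // mulr1.
clear E; case: n Hn => [|n] Hn.
  have -> : (Negz 0 + 1 = 0)%R by [].
  by rewrite /= !big_ord0 invr1.
have -> : (Negz n.+1 + 1 = Negz n)%R by rewrite !NegzE; lia.
by [].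
Qed.

Lemma poch_addn x (z : int) (j : nat) :
  (forall w : int, x + w%:~R != 0) ->
  poch x (z + j%:Z) = poch x z * \prod_(i < j) (x + (z + i%:Z)%:~R).
Proof.
move=> H; elim: j => [|j IH]; first by rewrite addr0 big_ord0 mulr1.
rewrite big_ord_recr /= mulrA -IH -poch_succ //.
by congr poch; lia.
Qed.

Lemma poch_shl x (z : int) : x != 0 -> poch x (z + 1) = x * poch (x + 1) z.
Proof.
case: z => n Hn.
  have -> : (Posz n + 1 = Posz n.+1)%R by rewrite -addn1 PoszD.
  by rewrite !poch_nat rfSl.
rewrite /= big_ord_recl /= addrK invfM mulrA mulfV // mul1r.
have -> : \prod_(i < n) (x + 1 - (bump 0 i).+1%:R) = \prod_(i < n) (x - i.+1%:R).
  apply: eq_bigr => i _; rewrite /bump /= add1n -!nat1r; ring.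
case: n {Hn} => [|n].
  have -> : (Negz 0 + 1 = 0)%R by [].
  by rewrite /= !big_ord0 invr1.
have -> : (Negz n.+1 + 1 = Negz n)%R by rewrite !NegzE; lia.
by [].
Qed.


Lemma poch_negshift x (z : int) (j : nat) :
  (forall w : int, x + w%:~R != 0) ->
  poch (x - j%:R) (z + j%:Z) = \prod_(i < j) (x - i.+1%:R) * poch x z.
Proof.
move=> H; elim: j => [|j IH]; first by rewrite subr0 addr0 big_ord0 mul1r.
have -> : (z + j.+1%:Z = (z + j%:Z) + 1)%R by lia.
have Hx : x - j.+1%:R != 0.
  by have := H (- (j.+1%:Z)); rewrite mulrNz.
rewrite poch_shl // -natr1 opprD addrA subrK IH big_ord_recr /= mulrA; congr (_ * _).
by rewrite mulrC -natr1 opprD addrA.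
Qed.

Lemma prod_neg x j : \prod_(i < j) (x - i.+1%:R) = (-1) ^+ j * rf (1 - x) j.
Proof.
rewrite /rf (eq_bigr (fun i : 'I_j => - ((1 - x) + i%:R))); last first.
  by move=> i _; rewrite -nat1r; ring.
by rewrite prodrN card_ord.
Qed.


Lemma chu n : forall x y : R,
  \sum_(k < n.+1) (-1) ^+ (n - k) * ('C(n, k))%:R * rf y k * rf (x + k%:R) (n - k) =
  \prod_(i < n) (y - x - n%:R + 1 + i%:R).
Proof.
elim: n => [|n IH] x y.
  by rewrite big_ord1 big_ord0 /rf !big_ord0 /= expr0 !mulr1.
pose g k := (-1) ^+ (n.+1 - k) * ('C(n, k))%:R * rf y k * rf (x + k%:R) (n.+1 - k).
pose h k := (-1) ^+ (n - k) * ('C(n, k))%:R * rf y k.+1 * rf (x + k.+1%:R) (n - k).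
have -> : \sum_(k < n.+2)
     (-1) ^+ (n.+1 - k) * ('C(n.+1, k))%:R * rf y k * rf (x + k%:R) (n.+1 - k)
   = \sum_(k < n.+2) g k + \sum_(i < n.+1) h i.
  rewrite [LHS]big_ord_recl [X in _ = X + _]big_ord_recl -addrA -big_split /=.
  congr (_ + _); first by rewrite /g !bin0.
  apply: eq_bigr => i _; rewrite /g /h /bump /= add1n !subSS binS natrD; ring.
rewrite big_ord_recr /= {2}/g bin_small // (_ : (0%:R : R) = 0) // mulr0 !mul0r addr0.
have Eg : \sum_(i < n.+1) g i = - (x + n%:R) *
   \sum_(k < n.+1) (-1) ^+ (n - k) * ('C(n, k))%:R * rf y k * rf (x + k%:R) (n - k).
  rewrite big_distrr /=; apply: eq_bigr => i _.
  have Hi : (i <= n)%N by rewrite -ltnS.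
  rewrite /g subSn // exprS rfS -addrA -natrD subnKC //; ring.
have Eh : \sum_(i < n.+1) h i = y *
   \sum_(k < n.+1) (-1) ^+ (n - k) * ('C(n, k))%:R * rf (y + 1) k * rf ((x + 1) + k%:R) (n - k).
  rewrite big_distrr /=; apply: eq_bigr => i _.
  rewrite /h rfSl -natr1 addrA [x + _ + 1]addrAC; ring.
rewrite Eg Eh !IH big_ord_recl.
have E1 : \prod_(i < n) (y + 1 - (x + 1) - n%:R + 1 + i%:R) =
          \prod_(i < n) (y - x - n%:R + 1 + i%:R).
  by apply: eq_bigr => i _; ring.
have E2 : \prod_(i < n) (y - x - n.+1%:R + 1 + (lift ord0 i)%:R) =
          \prod_(i < n) (y - x - n%:R + 1 + i%:R).
  by apply: eq_bigr => i _; rewrite lift0 -!nat1r; ring.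
rewrite E1 E2 /= -nat1r; ring.
Qed.

End H.
Arguments rf {R}.

Lemma bin_rise m k : ('C((m + k).-1, k) * k`!)%N = \prod_(i < k) (m + i)%N.
Proof.
elim: k => [|k IH]; first by rewrite big_ord0 bin0.
rewrite big_ord_recr /= -IH factS addnS /= mulnCA mulnA -mul_bin_diag.
by rewrite [RHS]mulnC mulnA.
Qed.

Lemma binR (R : numFieldType) (n k : nat) : (k <= n)%N ->
  ('C(n, k))%:R = n`!%:R / (k`!%:R * (n - k)`!%:R) :> R.
Proof.
move=> H; rewrite -(bin_fact H) !natrM mulfK //.
by rewrite mulf_neq0 // pnatr_eq0 -lt0n fact_gt0.
Qed.

Lemma vander m k : (0 < k)%N ->
  \sum_(1 <= l < k.+1) 'C(k.-1, l.-1) * 'C(m, l) = 'C((m + k).-1, k).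
Proof.
case: k => [//|k] _.
rewrite addnS /= -binomial.Vandermonde big_ord_recl (bin_small (n := k)) // muln0 add0n.
rewrite big_add1 /= big_mkord; apply: eq_bigr => i _.
rewrite /bump /= add1n subSS bin_sub; last by rewrite -ltnS.
by rewrite mulnC.
Qed.

Lemma rf_neq0 (R : fieldType) (x : R) n : (forall i : nat, x + i%:R != 0) -> rf x n != 0.
Proof. by move=> H; apply/prodf_neq0 => i _; apply: H. Qed.

Lemma factR_neq0 (R : numFieldType) n : (n`!)%:R != 0 :> R.
Proof. by rewrite pnatr_eq0 -lt0n fact_gt0. Qed.

Section Main.
Variable C : numClosedFieldType.

Lemma termE (a b d : C) (m n k l : nat)
  (ha : forall w : int, a + w%:~R != 0)
  (hd : forall i : nat, d + i%:R != 0)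
  (h1a : forall i : nat, 1 - a + i%:R != 0) :
  (1 <= l)%N -> (l <= k)%N -> (k <= n)%N ->
  fps_shift l k (fps_scale (coefKL a b d k l)
         (fps_negy (hornH3 (a - k%:R + l%:R) (b + l%:R) (d + l%:R)))) m n
  = poch a (m%:Z - n%:Z) * rf b m / rf d m * (-1) ^+ (n - k)
    * ('C(k.-1, l.-1) * 'C(m, l))%:R / ((m`!)%:R * ((n - k)`!)%:R * rf (1 - a) k).
Proof.
move=> hl1 hlk hkn.
rewrite /fps_shift hkn andbT.
case: (leqP l m) => hlm; last first.
  by rewrite (bin_small hlm) muln0 mulr0n mulr0 mul0r.
rewrite /fps_scale /fps_negy /hornH3 /coefKL.

have -> : a - k%:R + l%:R = a - (k - l)%N%:R by rewrite natrB //; ring.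
have -> : ((m - l)%N%:Z - (n - k)%N%:Z = (m%:Z - n%:Z) + (k - l)%N%:Z)%R by lia.
rewrite poch_negshift // prod_neg !poch_nat.
have Eb : rf b m = rf b l * rf (b + l%:R) (m - l) by rewrite -rf_add subnKC.
have Ed : rf d m = rf d l * rf (d + l%:R) (m - l) by rewrite -rf_add subnKC.
rewrite Eb Ed natrM (@binR _ m l hlm) (@binR _ k.-1 l.-1); last first.
  by lia.
have -> : (k.-1 - l.-1 = k - l)%N by lia.
have S : (-1) ^+ (k - l) * (-1) ^+ (k - l) = 1 :> C.
  by rewrite -exprD addnn -mul2n exprM sqrrN expr1n expr1n.
rewrite [in RHS](_ : (-1) ^+ (n - k) = (-1) ^+ (k - l) * (-1) ^+ (k - l) * (-1) ^+ (n - k) :> C); last by rewrite S mul1r.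
field.
rewrite !factR_neq0 !rf_neq0 // => i; rewrite -?addrA -?natrD //.
Qed.

End Main.

From Stdlib Require Import FunctionalExtensionality.

Lemma rise_rf (R : fieldType) m k : ('C((m + k).-1, k))%:R * (k`!)%:R = rf (m%:R : R) k.
Proof.
by rewrite -natrM bin_rise natr_prod /rf; apply: eq_bigr => i _; rewrite natrD.
Qed.

Theorem mainTheorem7 (C : numClosedFieldType) (a b d : C)
  (ha : forall z : int, a != z%:~R)
  (hd : forall n : nat, d != - n%:R) :
  fps_mul (hyp2F1 a b d) (hyp0F1 (1 - a)) =
  fps_add (fps_negy (hornH3 a b d))
    (fps_sum_xy (fun k l =>
       fps_scale (coefKL a b d k l)
         (fps_negy (hornH3 (a - k%:R + l%:R) (b + l%:R) (d + l%:R))))).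
Proof.
have ha' : forall w : int, a + w%:~R != 0.
  by move=> w; rewrite addr_eq0 -intrN; exact: ha.
have hd' : forall i : nat, d + i%:R != 0.
  by move=> i; rewrite addr_eq0; exact: hd.
have h1a : forall i : nat, 1 - a + i%:R != 0.
  move=> i; rewrite addrAC subr_eq0 eq_sym nat1r.
  by have := ha i.+1; rewrite -pmulrn.
apply: functional_extensionality => m; apply: functional_extensionality => n.
have L : fps_mul (hyp2F1 a b d) (hyp0F1 (1 - a)) m n =
   poch a m * poch b m / (poch d m * (m`!)%:R) * (1 / (poch (1 - a) n * (n`!)%:R)).
  rewrite /fps_mul big_ord_recr /= big1 ?add0r; last first.
    move=> i _; apply: big1 => j _.
    by rewrite /hyp0F1 subn_eq0 leqNgt ltn_ord /= mulr0.
  rewrite subnn big_ord_recl big1 ?addr0; last first.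
    by move=> j _; rewrite /hyp2F1 /bump /= mul0r.
  by rewrite /hyp2F1 /hyp0F1 /= subn0.
rewrite L /fps_add /fps_negy /fps_sum_xy.
set B := poch a (m%:Z - n%:Z) * rf b m / rf d m.
pose F k := B * (-1) ^+ (n - k) / ((m`!)%:R * ((n - k)`!)%:R * rf (1 - a) k)
            * ('C((m + k).-1, k))%:R.
rewrite (@eq_big_nat _ _ _ 1 n.+1 _ F); last first.
  move=> k /andP[hk1 hkn]; rewrite /F -vander // natr_sum big_distrr /=.
  apply: eq_big_nat => l /andP[hl1 hlk].
  apply: etrans; first exact: (@termE C a b d m n k l ha' hd' h1a hl1 hlk hkn).
  by rewrite /B; ring.
rewrite (_ : (-1) ^+ n * hornH3 a b d m n = F 0%N); last first.
  rewrite /F /hornH3 /B subn0 addn0 bin0 !poch_nat /rf big_ord0.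
  field; rewrite !factR_neq0 !rf_neq0 //.
rewrite -big_ltn // big_mkord.
have R3 : \sum_(k < n.+1) F k = B / ((m`!)%:R * (n`!)%:R * rf (1 - a) n) *
   \sum_(k < n.+1) (-1) ^+ (n - k) * ('C(n, k))%:R * rf (m%:R : C) k * rf ((1 - a) + k%:R) (n - k).
  rewrite big_distrr /=; apply: eq_bigr => k _.
  have hk : (k <= n)%N by rewrite -ltnS.
  rewrite /F -(rise_rf C m k) (@binR _ n k hk).
  have -> : rf (1 - a) n = rf (1 - a) k * rf (1 - a + k%:R) (n - k) by rewrite -rf_add subnKC.
  field; rewrite !factR_neq0 !rf_neq0 // => i; rewrite -(addrA (1 - a)) -natrD //.
rewrite R3 chu.
have Pa : poch a m = poch a (m%:Z - n%:Z) * \prod_(i < n) (m%:R - (1 - a) - n%:R + 1 + i%:R).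
  rewrite {1}(_ : (m%:Z = (m%:Z - n%:Z) + n%:Z)%R); last by lia.
  rewrite poch_addn //; congr (_ * _); apply: eq_bigr => i _.
  rewrite !intrD intrN -!pmulrn; ring.
rewrite Pa /B !poch_nat.
field; rewrite !factR_neq0 !rf_neq0 //.
Qed.
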